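(* Let $r:\mathbb{R}\to[0,1]$, $0<\phi\le1$, $\eta_\lambda>0$, $\alpha\in(0,1)$, and let $(\lambda^*,c^* )$ be a fixed point of $F(\lambda,c)=\big(\phi\lambda-\eta_\lambda(r(\lambda)-c),\ (1-\alpha)c+\alpha r(\lambda)\big)$ (so $r(\lambda^* )=c^*$), with $r$ differentiable at $\lambda^*$ and $s=r'(\lambda^* )$. Consider the stochastic recursion $\lambda_{t+1}=\phi\lambda_t-\eta_\lambda(r_t-c_t)$, $c_{t+1}=(1-\alpha)c_t+\alpha r_t$, where the empirical flip rate is $r_t=r(\lambda_t)+\xi_t$ with $\mathbb{E}[\xi_t\mid\lambda_t]=0$ and $|\xi_t|\le\delta$ almost surely for some $\delta>0$. If the Jacobian $J=\begin{pmatrix}\phi-\eta_\lambda s & \eta_\lambda\\ \alpha s & 1-\alpha\end{pmatrix}$ has spectral radius $\rho(J)<1$, then the trajectory $(\lambda_t,c_t)$ is almost surely bounded, i.e. $\sup_{t\ge0}\|(\lambda_t,c_t)\|<\infty$ almost surely.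
   Context: Interpretation: within a mean-field approximation with RBM parameters frozen at $\theta^*$, $r(\lambda)=r(\theta^*,\lambda)$ is the mean Gibbs-sampler flip rate at log-temperature $\lambda$ (temperature $e^\lambda$), and $c_t$ is an exponentially smoothed reference flip rate. *)

(* Defs.v *)
From HB Require Import structures.
From mathcomp Require Import all_boot all_order all_algebra.
From mathcomp Require Import all_classical all_reals all_analysis.
From mathcomp Require Import complex.
Set Implicit Arguments. Unset Strict Implicit. Unset Printing Implicit Defensive.
Import Order.TTheory GRing.Theory Num.Theory.
Local Open Scope ring_scope.
Local Open Scope classical_set_scope.

Definition flipJ (R : realType) (phi eta alpha s : R) : 'M[R]_2 :=
  \matrix_(i < 2, j < 2)
    (if (val i == 0)%N then (if (val j == 0)%N then phi - eta * s else eta)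
     else (if (val j == 0)%N then alpha * s else 1 - alpha)).

Definition spectral_radius_lt1 (R : realType) (A : 'M[R]_2) : Prop :=
  forall z : R[i], eigenvalue (map_mx (real_complex R) A) z -> `|z| < 1.

(* E[X | Y] = 0 : X is integrable and for every Borel set B,
   E[X ; Y in B] = 0 (defining property of conditional expectation given sigma(Y)). *)
Definition cond_mean_zero d (T : measurableType d) (R : realType)
  (P : probability T R) (X Y : T -> R) : Prop :=
  P.-integrable setT (EFin \o X) /\
  forall B : set R, measurable B ->
    (\int[P]_(x in Y @^-1` B) (X x)%:E = 0)%E.

(* Main.v *)
Require Import Defs.
From HB Require Import structures.
From mathcomp Require Import all_boot all_order all_algebra.
From mathcomp Require Import all_classical all_reals all_analysis.
From mathcomp Require Import complex.
From mathcomp Require Import ring lra.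
Import Order.TTheory GRing.Theory Num.Theory.
Local Open Scope ring_scope.
Local Open Scope classical_set_scope.

Lemma det_bound (R : realType) (r : R -> R) (phi eta alpha delta : R)
  (lam c xi : nat -> R) :
  (forall x, 0 <= r x <= 1) ->
  0 < phi <= 1 -> 0 < eta -> 0 < alpha < 1 -> 0 < delta ->
  (forall t, lam t.+1 = phi * lam t - eta * ((r (lam t) + xi t) - c t)) ->
  (forall t, c t.+1 = (1 - alpha) * c t + alpha * (r (lam t) + xi t)) ->
  (forall t, `|xi t| <= delta) ->
  exists M : R, forall t : nat, Num.sqrt (lam t ^+ 2 + c t ^+ 2) <= M.
Proof.
move=> hr /andP[ph0 ph1] he /andP[a0 a1] hd hl hc hx.
set K := Num.max `|c 0%N| (1 + delta).
have hK1 : `|c 0%N| <= K by rewrite le_max lexx.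
have hK2 : 1 + delta <= K by rewrite le_max lexx orbT.
have cb : forall t, `|c t| <= K.
  elim=> [//|t IH]; rewrite hc.
  have := hr (lam t); have := hx t; move=> /ler_normlP [h1 h2] /andP[h3 h4].
  move/ler_normlP: IH => [h5 h6].
  have e1 : 0 <= 1 - alpha by lra.
  apply/ler_normlP; split; nra.
set q := eta / alpha.
have q0 : 0 < q by rewrite divr_gt0.
have hq : q * alpha = eta by rewrite /q mulfVK // gt_eqF.
set U := Num.max `|lam 0%N + q * c 0%N| (q * K).
have hU1 : `|lam 0%N + q * c 0%N| <= U by rewrite le_max lexx.
have hU2 : q * K <= U by rewrite le_max lexx orbT.
have ub : forall t, `|lam t + q * c t| <= U.
  elim=> [//|t IH].
  have -> : lam t.+1 + q * c t.+1 = phi * (lam t + q * c t) + q * (1 - phi) * c t.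
    rewrite hl hc -hq; ring.
  move/ler_normlP: IH => [h5 h6].
  move/ler_normlP: (cb t) => [h7 h8].
  have e1 : 0 <= 1 - phi by lra.
  have e2 : 0 <= q * (1 - phi) by rewrite mulr_ge0 // ltW.
  apply/ler_normlP; split; nra.
exists (U + q * K + K) => t.
have h1 := ub t; have h2 := cb t.
have hs : Num.sqrt (lam t ^+ 2 + c t ^+ 2) <= `|lam t| + `|c t|.
  rewrite -(ger0_norm (addr_ge0 (normr_ge0 (lam t)) (normr_ge0 (c t)))).
  rewrite -sqrtr_sqr ler_sqrt; last by rewrite sqr_ge0.
  rewrite sqrrD -(real_normK (num_real (lam t))) -(real_normK (num_real (c t))).
  have := mulr_ge0 (normr_ge0 (lam t)) (normr_ge0 (c t)). lra.
apply: (le_trans hs).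
have : `|lam t| <= `|lam t + q * c t| + q * `|c t|.
  have -> : q * `|c t| = `|q * c t| by rewrite normrM gtr0_norm.
  by rewrite -[X in `|X|](addrK (q * c t)) ler_normB.
have : q * `|c t| <= q * K by rewrite ler_pM2l.
lra.
Qed.

Theorem proposition1 (R : realType) (d : measure_display) (T : measurableType d)
  (P : probability T R)
  (r : R -> R) (phi eta alpha delta lam_s c_s s : R)
  (lam c xi : nat -> T -> R) :
  (forall x, 0 <= r x <= 1) ->
  0 < phi <= 1 -> 0 < eta -> 0 < alpha < 1 -> 0 < delta ->
  (* (lam_s, c_s) is a fixed point of F *)
  phi * lam_s - eta * (r lam_s - c_s) = lam_s ->
  (1 - alpha) * c_s + alpha * r lam_s = c_s ->
  (* r differentiable at lam_s with derivative s *)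
  is_derive lam_s 1 r s ->
  (* the stochastic recursion, with r_t = r(lam_t) + xi_t *)
  (forall t, measurable_fun setT (lam t)) ->
  (forall t x, lam t.+1 x = phi * lam t x - eta * ((r (lam t x) + xi t x) - c t x)) ->
  (forall t x, c t.+1 x = (1 - alpha) * c t x + alpha * (r (lam t x) + xi t x)) ->
  (forall t, cond_mean_zero P (xi t) (lam t)) ->
  (forall t, {ae P, forall x, `|xi t x| <= delta}) ->
  spectral_radius_lt1 (flipJ phi eta alpha s) ->
  {ae P, forall x, exists M : R, forall t : nat,
      Num.sqrt (lam t x ^+ 2 + c t x ^+ 2) <= M}.
Proof.
move=> hr hph he ha hd _ _ _ _ hl hc _ hx _.
have := ae_foralln hx.
apply: filterS => x hxx.
exact (@det_bound R r phi eta alpha delta (fun t => lam t x) (fun t => c t x)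
          (fun t => xi t x) hr hph he ha hd (fun t => hl t x) (fun t => hc t x) hxx).
Qed.
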